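(* Let $d\ge 2$, let $B$ be a ball of radius $r\in(0,\pi/2)$ in $\mathbb{S}^d$, and let $S_{\mathrm{reg}}$ be a regular simplex circumscribed about $B$. (i) For every $d\ge3$, if $r$ is sufficiently close to $\pi/2$, then there is a spherical simplex $S$ containing $B$ with $\mathrm{vol}_1(\mathrm{skel}_1(S))<\mathrm{vol}_1(\mathrm{skel}_1(S_{\mathrm{reg}}))$. (ii) For every $r\in(0,\pi/2)$, if $d$ is sufficiently large, then there is a spherical simplex $S$ containing $B$ with $\mathrm{vol}_1(\mathrm{skel}_1(S))<\mathrm{vol}_1(\mathrm{skel}_1(S_{\mathrm{reg}}))$.
   Context: A spherical simplex is the spherical convex hull of $d+1$ points in an open hemisphere of $\mathbb{S}^d$ not on a common great subsphere; it is regular if all its edges have equal length, and circumscribed about $B$ if it contains $B$ and all its facets touch $B$. $\mathrm{vol}_1(\mathrm{skel}_1(S))$ is the total edge length of $S$ (sum of the spherical lengths of its edges). *)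

(* Defs.v *)
(* R : realType, points of S^d are unit row vectors in R^(d+1). *)
From HB Require Import structures.
From mathcomp Require Import all_boot all_order all_algebra.
From mathcomp Require Import all_classical all_reals all_analysis.
Set Implicit Arguments. Unset Strict Implicit. Unset Printing Implicit Defensive.
Import Order.TTheory GRing.Theory Num.Theory.
Local Open Scope ring_scope.
Local Open Scope classical_set_scope.

Section SphDefs.
Variable R : realType.

Definition dotp (n : nat) (u v : 'rV[R]_n) : R := \sum_(i < n) u 0 i * v 0 i.

Definition on_sphere (n : nat) (u : 'rV[R]_n) : Prop := dotp u u = 1.

Definition sdist (n : nat) (u v : 'rV[R]_n) : R := acos (dotp u v).

Definition sball (n : nat) (c : 'rV[R]_n) (r : R) : set 'rV[R]_n :=
  [set x | on_sphere x /\ sdist c x <= r].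

Definition shull_sub (n m : nat) (v : 'I_m -> 'rV[R]_n) (P : 'I_m -> bool)
  : set 'rV[R]_n :=
  [set x | on_sphere x /\ exists lam : 'I_m -> R,
      (forall i, 0 <= lam i) /\ (forall i, ~~ P i -> lam i = 0) /\
      x = \sum_(i < m) lam i *: v i].

Definition shull (n m : nat) (v : 'I_m -> 'rV[R]_n) : set 'rV[R]_n :=
  shull_sub v (fun _ => true).

Definition sfacet (n m : nat) (v : 'I_m -> 'rV[R]_n) (j : 'I_m) : set 'rV[R]_n :=
  shull_sub v (fun i => i != j).

Definition in_open_hemisphere (n m : nat) (v : 'I_m -> 'rV[R]_n) : Prop :=
  exists h : 'rV[R]_n, on_sphere h /\ forall i, 0 < dotp h (v i).

Definition on_common_great_subsphere (n m : nat) (v : 'I_m -> 'rV[R]_n) : Prop :=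
  exists a : 'rV[R]_n, a != 0 /\ forall i, dotp a (v i) = 0.

Definition spherical_simplex (d : nat) (v : 'I_d.+1 -> 'rV[R]_d.+1) : Prop :=
  (forall i, on_sphere (v i)) /\ in_open_hemisphere v /\
  ~ on_common_great_subsphere v.

Definition skel1_length (d : nat) (v : 'I_d.+1 -> 'rV[R]_d.+1) : R :=
  \sum_(i < d.+1) \sum_(j < d.+1 | (i < j)%N) sdist (v i) (v j).

Definition regular_simplex (d : nat) (v : 'I_d.+1 -> 'rV[R]_d.+1) : Prop :=
  spherical_simplex v /\
  exists l : R, forall i j, i != j -> sdist (v i) (v j) = l.

Definition circumscribed (d : nat) (v : 'I_d.+1 -> 'rV[R]_d.+1)
  (B : set 'rV[R]_d.+1) : Prop :=
  B `<=` shull v /\ forall j, exists x, sfacet v j x /\ B x.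

End SphDefs.

(* Main.v *)
Require Import Defs.
From HB Require Import structures.
From mathcomp Require Import all_boot all_order all_algebra.
From mathcomp Require Import all_classical all_reals all_analysis.
From mathcomp Require Import ring lra.
Import Order.TTheory GRing.Theory Num.Theory.
Import numFieldNormedType.Exports.
Local Open Scope ring_scope.
Local Open Scope classical_set_scope.

Lemma dotpC {R : realType} {n : nat} (u v : 'rV[R]_n) : dotp u v = dotp v u.
Proof. by apply: eq_bigr => i _; rewrite mulrC. Qed.

Lemma dotpDl {R : realType} {n : nat} (u v w : 'rV[R]_n) :
  dotp (u + v) w = dotp u w + dotp v w.
Proof. by rewrite /dotp -big_split /=; apply: eq_bigr => i _; rewrite mxE mulrDl. Qed.

Lemma dotpDr {R : realType} {n : nat} (u v w : 'rV[R]_n) :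
  dotp w (u + v) = dotp w u + dotp w v.
Proof. by rewrite dotpC dotpDl !(dotpC w). Qed.

Lemma dotpZl {R : realType} {n : nat} (a : R) (u w : 'rV[R]_n) :
  dotp (a *: u) w = a * dotp u w.
Proof. by rewrite /dotp mulr_sumr; apply: eq_bigr => i _; rewrite mxE mulrA. Qed.

Lemma dotpZr {R : realType} {n : nat} (a : R) (u w : 'rV[R]_n) :
  dotp w (a *: u) = a * dotp w u.
Proof. by rewrite dotpC dotpZl dotpC. Qed.

Lemma dotpNl {R : realType} {n : nat} (u w : 'rV[R]_n) : dotp (- u) w = - dotp u w.
Proof. by rewrite -scaleN1r dotpZl mulN1r. Qed.

Lemma dotpNr {R : realType} {n : nat} (u w : 'rV[R]_n) : dotp w (- u) = - dotp w u.
Proof. by rewrite dotpC dotpNl dotpC. Qed.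

Lemma dotpBl {R : realType} {n : nat} (u v w : 'rV[R]_n) :
  dotp (u - v) w = dotp u w - dotp v w.
Proof. by rewrite dotpDl dotpNl. Qed.

Lemma dotpBr {R : realType} {n : nat} (u v w : 'rV[R]_n) :
  dotp w (u - v) = dotp w u - dotp w v.
Proof. by rewrite dotpDr dotpNr. Qed.

Lemma dotp0l {R : realType} {n : nat} (w : 'rV[R]_n) : dotp 0 w = 0.
Proof. by rewrite /dotp big1 // => i _; rewrite mxE mul0r. Qed.

Lemma dotp0r {R : realType} {n : nat} (w : 'rV[R]_n) : dotp w 0 = 0.
Proof. by rewrite dotpC dotp0l. Qed.

Lemma dotp_sumr {R : realType} {n m : nat} (w : 'rV[R]_n) (f : 'I_m -> 'rV[R]_n) :
  dotp w (\sum_(k < m) f k) = \sum_(k < m) dotp w (f k).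
Proof.
apply: (big_morph (dotp w)); last exact: dotp0r.
by move=> x y; rewrite dotpDr.
Qed.

Lemma dotp_ge0 {R : realType} {n : nat} (u : 'rV[R]_n) : 0 <= dotp u u.
Proof. by apply: sumr_ge0 => i _; rewrite -expr2 sqr_ge0. Qed.

Lemma dotp_eq0 {R : realType} {n : nat} (u : 'rV[R]_n) : dotp u u = 0 -> u = 0.
Proof.
move=> /eqP; rewrite psumr_eq0; last by move=> i _; rewrite -expr2 sqr_ge0.
move=> /allP H; apply/rowP => j; rewrite mxE.
have := H j (mem_index_enum _); rewrite /= mulf_eq0 orbb => /eqP ->. by [].
Qed.

Lemma dotp_CS1 {R : realType} {n : nat} (v c : 'rV[R]_n) :
  dotp c c = 1 -> dotp v c ^+ 2 <= dotp v v.
Proof.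
move=> hc; have := dotp_ge0 (v - dotp v c *: c).
rewrite !dotpBl !dotpBr !dotpZl !dotpZr hc (dotpC c v); lra.
Qed.

Lemma dotp_unit_bnd {R : realType} {n : nat} (u v : 'rV[R]_n) :
  dotp u u = 1 -> dotp v v = 1 -> -1 <= dotp u v <= 1.
Proof.
move=> hu hv; have := @dotp_CS1 _ _ u v hv; rewrite hu => h.
apply/andP; split; nra.
Qed.

Lemma sc_form {R : realType} (x : R) k :
  sin_coeff' x k = (-1) ^+ (odd k) * (x ^+ k.*2.+1 / (k.*2.+1)`!%:R).
Proof. by rewrite /sin_coeff' -exprnP signr_odd mulrA. Qed.

Lemma sc_pair {R : realType} (x : R) m : 0 < x < 2 ->
  0 < x ^+ m.*2.+1 / (m.*2.+1)`!%:R - x ^+ m.+1.*2.+1 / (m.+1.*2.+1)`!%:R.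
Proof.
move=> /andP[x0 x2].
have -> : x ^+ m.+1.*2.+1 / (m.+1.*2.+1)`!%:R =
   (x ^+ m.*2.+1 / (m.*2.+1)`!%:R) * (x ^+ 2 / ((m.*2.+2)%:R * (m.*2.+3)%:R)).
  rewrite doubleS !factS !natrM.
  have -> : x ^+ m.*2.+3 = x ^+ m.*2.+1 * x ^+ 2 by rewrite -exprD addn2.
  have hf : (m.*2.+1)`!%:R != 0 :> R by rewrite pnatr_eq0 -lt0n fact_gt0.
  have h2 : (m.*2.+2)%:R != 0 :> R by rewrite pnatr_eq0.
  have h3 : (m.*2.+3)%:R != 0 :> R by rewrite pnatr_eq0.
  field.
  by rewrite -!natrD !pnatr_eq0 /= -lt0n fact_gt0 nat1r pnatr_eq0.
have hp : 0 < x ^+ m.*2.+1 / (m.*2.+1)`!%:R.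
  by rewrite divr_gt0 ?exprn_gt0 // ltr0n fact_gt0.
rewrite -{1}(mulr1 (x ^+ m.*2.+1 / _)) -mulrBr mulr_gt0 // subr_gt0.
rewrite ltr_pdivrMr; last by rewrite mulr_gt0 // ltr0n.
rewrite mul1r.
have h2 : 2%:R <= (m.*2.+2)%:R :> R by rewrite ler_nat.
have h3 : 2%:R <= (m.*2.+3)%:R :> R by rewrite ler_nat.
nra.
Qed.

Lemma sin_lt_x {R : realType} (x : R) : 0 < x < 2 -> sin x < x.
Proof.
move=> hx.
rewrite -(opprK (sin x)) ltrNl.
have /cvgN h := @cvg_sin_coeff' R x.
rewrite -(cvg_lim (@Rhausdorff R) h).
have -> : - x = \sum_(0 <= i < 1) (- sin_coeff' x) i.
  rewrite big_nat1; change (- x = - sin_coeff' x 0%N).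
  by rewrite sc_form /= expr0 mul1r expr1 (_ : (0.*2.+1)`!%:R = 1 :> R) ?divr1.
rewrite -seriesN; apply: lt_sum_lim_series.
  by move/cvgP in h; rewrite seriesN.
move=> d; change (0 < - sin_coeff' x (1 + d.*2)%N + - sin_coeff' x (1 + d.*2.+1)%N).
rewrite !sc_form /= add1n odd_double /=.
rewrite !expr1 !mulN1r !opprK mul1r.
have := sc_pair x (d.*2.+1) hx; rewrite doubleS; lra.
Qed.

Lemma sin_gt_cubic {R : realType} (x : R) : 0 < x < 2 -> x - x ^+ 3 / 6 < sin x.
Proof.
move=> hx.
have h := @cvg_sin_coeff' R x.
have : \sum_(0 <= i < 2) sin_coeff' x i < sin x.
  rewrite -(cvg_lim (@Rhausdorff R) h).
  apply: lt_sum_lim_series.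
    by move/cvgP in h.
  move=> d; rewrite !sc_form /= add2n /= odd_double /= expr0 expr1 mul1r mulN1r.
  have := sc_pair x (d.*2.+2) hx; rewrite doubleS; lra.
rewrite big_nat_recr //= big_nat1 !sc_form /= expr0 expr1 mul1r mulN1r.
rewrite (_ : (0.*2.+1)`!%:R = 1 :> R) ?divr1 // expr1.
Qed.

Lemma acos_lb {R : realType} (t : R) : -1 <= t <= 0 -> pi / 2 - t <= acos t.
Proof.
move=> /andP[t1 t0].
have ht : -1 <= t <= 1 by apply/andP; split => //; lra.
have c := acosK (x:=t); rewrite in_itv /= ht in c; have {}c := c isT.
have a0 := acos_ge0 ht; have api := acos_lepi ht.
have [hp|hp] := ltP (acos t) (pi / 2).
  have : 0 < cos (acos t).
    apply: cos_gt0_pihalf; apply/andP; split => //.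
    have := pi_gt0 R; lra.
  rewrite c; lra.
have hs : sin (acos t - pi / 2) = - t by rewrite sinBpihalf c.
have [h0|h0] := eqVneq (acos t - pi / 2) 0.
  by move: hs; rewrite h0 sin0; lra.
have := @sin_lt_x R (acos t - pi / 2).
rewrite hs.
have h2 := pihalf_lt2 R.
have hpi : pi <= 2 * (pi / 2) :> R by lra.
move=> H; suff : - t < acos t - pi / 2 by lra.
apply: H; apply/andP; split.
  by rewrite lt_def h0 /=; lra.
lra.
Qed.

Lemma acos_ub {R : realType} (y K : R) : 0 <= y <= 1 -> 0 <= K <= pi / 2 ->
  y <= sin K -> acos (- y) <= pi / 2 + K.
Proof.
move=> /andP[y0 y1] /andP[K0 K1] hyK.
have hy : -1 <= - y <= 1 by apply/andP; split; lra.
have c := acosK (x:=-y); rewrite in_itv /= hy in c; have {}c := c isT.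
have a0 := acos_ge0 hy; have api := acos_lepi hy.
rewrite leNgt; apply/negP => H.
have : cos (acos (- y)) < cos (pi / 2 + K).
  rewrite ltr_cos // in_itv /=; apply/andP; split => //; lra.
by rewrite c addrC cosDpihalf; lra.
Qed.

Lemma acos_le_cos {R : realType} (x r : R) : -1 <= x <= 1 -> 0 <= r <= pi ->
  acos x <= r -> cos r <= x.
Proof.
move=> hx hr h.
have c := acosK (x:=x); rewrite in_itv /= hx in c; have {}c := c isT.
have a0 := acos_ge0 hx; have api := acos_lepi hx.
rewrite -[X in _ <= X]c leNgt; apply/negP => H.
move: H; rewrite ltr_cos ?in_itv /= ?a0 ?api //; lra.
Qed.

Lemma acos_cos {R : realType} (r : R) : 0 <= r <= pi -> acos (cos r) = r.
Proof. by move=> hr; apply: cosK; rewrite in_itv /=. Qed.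

Definition e0 {R : realType} {n : nat} : 'rV[R]_n.+1 := \row_j ((j == ord0)%:R).

Definition refl {R : realType} {n : nat} (w x : 'rV[R]_n) : 'rV[R]_n :=
  x - (2 * dotp w x / dotp w w) *: w.

Lemma refl_dot {R : realType} {n : nat} (w x y : 'rV[R]_n) :
  dotp (refl w x) (refl w y) = dotp x y.
Proof.
rewrite /refl !dotpBl !dotpBr !dotpZl !dotpZr (dotpC x w).
have [h|h] := eqVneq (dotp w w) 0.
  by rewrite h !invr0 !mulr0 !mul0r !subr0.
field; exact: h.
Qed.

Lemma reflK {R : realType} {n : nat} (w x : 'rV[R]_n) : refl w (refl w x) = x.
Proof.
rewrite /refl dotpBr dotpZr.
have [h|h] := eqVneq (dotp w w) 0.
  by rewrite h !invr0 !mulr0 !scale0r !subr0.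
rewrite -addrA -opprD -scalerDl.
have -> : 2 * dotp w x / dotp w w +
    2 * (dotp w x - 2 * dotp w x / dotp w w * dotp w w) / dotp w w = 0.
  by field.
by rewrite scale0r subr0.
Qed.

Lemma reflD {R : realType} {n : nat} (w x y : 'rV[R]_n) :
  refl w (x + y) = refl w x + refl w y.
Proof.
rewrite /refl dotpDr mulrDr mulrDl scalerDl; set a := _ *: w; set b := _ *: w.
by rewrite opprD !addrA; congr (_ - _); rewrite -!addrA; congr (_ + _); rewrite addrC.
Qed.

Lemma reflZ {R : realType} {n : nat} (w x : 'rV[R]_n) (a : R) :
  refl w (a *: x) = a *: refl w x.
Proof.
rewrite /refl dotpZr scalerBr scalerA; congr (_ - _ *: _).
by rewrite mulrA (mulrC 2 a) -!mulrA.
Qed.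

Lemma refl0 {R : realType} {n : nat} (w : 'rV[R]_n) : refl w 0 = 0.
Proof. by rewrite -(scale0r 0) reflZ !scale0r. Qed.

Lemma refl_sum {R : realType} {n m : nat} (w : 'rV[R]_n) (f : 'I_m -> 'rV[R]_n) :
  refl w (\sum_(k < m) f k) = \sum_(k < m) refl w (f k).
Proof.
apply: (big_morph (refl w)); last exact: refl0.
by move=> x y; rewrite reflD.
Qed.

Lemma e0_unit {R : realType} {n : nat} : dotp (@e0 R n) e0 = 1.
Proof.
rewrite /dotp (bigD1 ord0) //= big1 ?addr0; first by rewrite !mxE eqxx mulr1.
by move=> j /negPf hj; rewrite !mxE hj mulr0.
Qed.

Lemma refl_e0 {R : realType} {n : nat} (c : 'rV[R]_n.+1) :
  dotp c c = 1 -> refl (e0 - c) e0 = c.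
Proof.
move=> hc; rewrite /refl.
have hww : dotp (e0 - c) (e0 - c) = 2 - 2 * dotp e0 c.
  by rewrite !dotpBl !dotpBr e0_unit hc (dotpC c e0); lra.
have hwe : dotp (e0 - c) e0 = 1 - dotp e0 c.
  by rewrite dotpBl e0_unit (dotpC c e0).
have [h|h] := eqVneq (dotp (e0 - c) (e0 - c)) 0.
  have /eqP := @dotp_eq0 _ _ _ h; rewrite subr_eq0 => /eqP hce.
  by rewrite h invr0 mulr0 scale0r subr0.
rewrite hwe hww in h *.
have -> : 2 * (1 - dotp e0 c) / (2 - 2 * dotp e0 c) = 1.
  by field.
by rewrite scale1r opprB addrC subrK.
Qed.

Lemma transport {R : realType} {d : nat} (W : 'I_d.+1 -> 'rV[R]_d.+1)
  (c : 'rV[R]_d.+1) (r : R) :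
  on_sphere c -> spherical_simplex W -> sball e0 r `<=` shull W ->
  exists S : 'I_d.+1 -> 'rV[R]_d.+1,
    spherical_simplex S /\ sball c r `<=` shull S /\
    skel1_length S = skel1_length W.
Proof.
move=> hc [Wu [[h [hu hh]] Wg]] Bin.
set w := e0 - c.
exists (fun k => refl w (W k)).
split; [split; [|split]|split].
- by move=> i; rewrite /on_sphere refl_dot; exact: Wu.
- exists (refl w h); split; first by rewrite /on_sphere refl_dot.
  by move=> i; rewrite refl_dot.
- move=> [a [a0 ha]]; apply: Wg; exists (refl w a); split.
    apply/eqP => ra; move/eqP: a0; apply.
    by rewrite -(reflK w a) ra refl0.
  by move=> i; rewrite -(refl_dot w) reflK ha.
- move=> x [xu xd].
  have hrc : refl w c = e0 by rewrite -(@refl_e0 _ _ c hc) reflK.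
  have : sball e0 r (refl w x).
    split; first by rewrite /on_sphere refl_dot.
    by rewrite /sdist -hrc refl_dot.
  move=> /Bin [yu [lam [l0 [_ hy]]]].
  split => //; exists lam; split => //; split => //.
  by rewrite -(reflK w x) hy refl_sum; apply: eq_bigr => k _; rewrite reflZ.
- rewrite /skel1_length; apply: eq_bigr => i _; apply: eq_bigr => j _.
  by rewrite /sdist refl_dot.
Qed.

Definition ek {R : realType} {n : nat} (k : 'I_n) : 'rV[R]_n := \row_j ((j == k)%:R).

Lemma dotp_ek {R : realType} {n : nat} (u : 'rV[R]_n) k : dotp u (ek k) = u 0 k.
Proof.
rewrite /dotp (bigD1 k) //= big1 ?addr0; first by rewrite !mxE eqxx mulr1.
by move=> j /negPf hj; rewrite !mxE hj mulr0.
Qed.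

Lemma sum_ne0_const {R : realType} {d : nat} (x : R) :
  \sum_(j < d.+1 | j != ord0) x = d%:R * x.
Proof.
rewrite sumr_const.
have -> : #|[pred j : 'I_d.+1 | j != ord0]| = d.
  by have := cardC1 (@ord0 d); rewrite card_ord.
by rewrite mulr_natl.
Qed.

Lemma sum_gt0_const {R : realType} {d : nat} (x : R) :
  \sum_(j < d.+1 | (0 < j)%N) x = d%:R * x.
Proof.
rewrite -sum_ne0_const; apply: eq_bigl => j.
by rewrite lt0n; congr negb; apply/eqP/eqP => [h|->//]; apply: val_inj.
Qed.

Lemma P_rec {R : realType} (n : nat) :
  \sum_(i < n.+1) \sum_(j < n.+1 | (i < j)%N) (1 : R) =
  \sum_(i < n) \sum_(j < n | (i < j)%N) (1 : R) + n%:R.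
Proof.
rewrite big_ord_recr /=.
rewrite [X in _ + X = _]big1; last by move=> j; rewrite ltnNge -ltnS ltn_ord.
rewrite addr0.
have -> : \sum_(i < n) \sum_(j < n.+1 | (widen_ord (leqnSn n) i < j)%N) (1 : R)
   = \sum_(i < n) (\sum_(j < n | (i < j)%N) (1 : R) + 1).
  apply: eq_bigr => i _.
  rewrite big_mkcond big_ord_recr /= ltn_ord -big_mkcond /=.
  by [].
by rewrite big_split /= sumr_const card_ord.
Qed.

Lemma P_val {R : realType} (n : nat) :
  2 * \sum_(i < n) \sum_(j < n | (i < j)%N) (1 : R) = n%:R * (n%:R - 1).
Proof.
elim: n => [|n IH]; first by rewrite big_ord0 mulr0 mul0r.
rewrite P_rec mulrDr IH -natr1; lra.
Qed.

Definition sym {R : realType} {d : nat} (a b : R) : 'rV[R]_d.+1 :=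
  \row_j (if j == ord0 then a else b).

Lemma dotp_sym {R : realType} {d : nat} (a b a' b' : R) :
  dotp (@sym R d a b) (sym a' b') = a * a' + d%:R * (b * b').
Proof.
rewrite /dotp (bigD1 ord0) //= !mxE eqxx; congr (_ + _).
rewrite -sum_ne0_const; apply: eq_bigr => j /negPf hj.
by rewrite !mxE hj.
Qed.

Definition cfg {R : realType} {d : nat} (cN sN : R) (k : 'I_d.+1) : 'rV[R]_d.+1 :=
  if k == ord0 then sym cN (- sN) else ek k.

Lemma dotp_ekek {R : realType} {n : nat} (i j : 'I_n) :
  dotp (ek i) (ek j) = (j == i)%:R :> R.
Proof. by rewrite dotp_ek mxE. Qed.

Lemma sq_le_dotp {R : realType} {d : nat} (x : 'rV[R]_d.+1) (k : 'I_d.+1) :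
  k != ord0 -> x 0 ord0 ^+ 2 + x 0 k ^+ 2 <= dotp x x.
Proof.
move=> hk; rewrite /dotp (bigD1 ord0) //= (bigD1 k) //= !expr2 addrA lerDl.
by apply: sumr_ge0 => i _; rewrite -expr2 sqr_ge0.
Qed.

Lemma cfg_simplex {R : realType} {d : nat} (cN sN : R) :
  (1 < d)%N -> 0 < cN -> 0 < sN -> cN ^+ 2 + d%:R * sN ^+ 2 = 1 ->
  spherical_simplex (@cfg R d cN sN).
Proof.
move=> d1 c0 s0 hcs.
have dR : 2 <= d%:R :> R by rewrite (ler_nat R 2 d).
have dn0 : d%:R != 0 :> R by rewrite pnatr_eq0 -lt0n ltnW.
split; [|split].
- move=> k; rewrite /on_sphere /cfg; case: ifP => _.
    by rewrite dotp_sym mulrNN -!expr2.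
  by rewrite dotp_ekek eqxx.
- set b := cN * sN / d%:R.
  have hb : 0 < b by rewrite divr_gt0 ?mulr_gt0 //; lra.
  have hbd : d%:R * b = cN * sN by rewrite /b mulrC divfK.
  have hsN : d%:R * sN ^+ 2 <= 1 by have := sqr_ge0 cN; lra.
  have hcN : cN ^+ 2 <= 1 by have := sqr_ge0 sN; nra.
  have hdb : d%:R * b ^+ 2 <= 1 / 4.
    have -> : d%:R * b ^+ 2 = (cN * sN) ^+ 2 / d%:R.
      by rewrite /b expr_div_n exprMn; field.
    rewrite ler_pdivrMr; last lra.
    have : (cN * sN) ^+ 2 <= 1 / d%:R.
      have h1 : sN ^+ 2 <= 1 / d%:R by rewrite ler_pdivlMr; nra.
      rewrite exprMn; apply: le_trans h1; rewrite ler_piMl ?sqr_ge0 //.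
    move=> h2; apply: (le_trans h2).
    rewrite ler_pdivrMr; last lra.
    nra.
  set a := Num.sqrt (1 - d%:R * b ^+ 2).
  have ha2 : a ^+ 2 = 1 - d%:R * b ^+ 2 by rewrite sqr_sqrtr //; lra.
  have ha0 : 0 <= a by exact: sqrtr_ge0.
  exists (sym a b); split.
    by rewrite /on_sphere dotp_sym -!expr2 ha2; lra.
  move=> k; rewrite /cfg; case: ifP => hk.
    rewrite dotp_sym !mulrN mulrA hbd.
    have hs4 : sN ^+ 2 <= 1 / 2.
      rewrite ler_pdivlMr; last lra. nra.
    have : sN ^+ 2 < a.
      have : (1 / 2) ^+ 2 < a ^+ 2 by rewrite ha2; lra.
      move=> h; have : 1 / 2 < a.
        by rewrite -(ltr_pXn2r (n:=2)) // ?nnegrE //; lra.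
      lra.
    nra.
  by rewrite dotp_ek mxE hk.
- move=> [a [a0 ha]]; move/eqP: a0; apply.
  have hak : forall k : 'I_d.+1, k != ord0 -> a 0 k = 0.
    by move=> k hk; have := ha k; rewrite /cfg (negPf hk) dotp_ek.
  have ha0 : a 0 ord0 = 0.
    have := ha ord0; rewrite /cfg eqxx /dotp (bigD1 ord0) //= big1.
      rewrite !mxE eqxx addr0 => /eqP; rewrite mulf_eq0 => /orP[/eqP //|].
      by move=> /eqP h; move: c0; rewrite h ltxx.
    by move=> j hj; rewrite hak // mul0r.
  apply/rowP => j; rewrite mxE; have [->|hj] := eqVneq j ord0.
    by rewrite (_ : 0 = ord0) //; apply: val_inj.
  by rewrite (_ : 0 = ord0) ?hak //; apply: val_inj.
Qed.

Lemma cfg_contain {R : realType} {d : nat} (cN sN co si r : R) :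
  0 < co -> 0 < cN -> 0 <= si -> co ^+ 2 + si ^+ 2 = 1 -> sN * co = cN * si ->
  0 <= r <= pi -> cos r = co ->
  sball e0 r `<=` shull (@cfg R d cN sN).
Proof.
move=> co0 cN0 si0 hcs hsc hr hcr x [xu xd].
have x0 : dotp e0 x = x 0 ord0 by rewrite dotpC dotp_ek.
have hb := @dotp_unit_bnd _ _ e0 x e0_unit xu.
have hx0 : co <= x 0 ord0.
  by rewrite -x0 -hcr; apply: acos_le_cos.
split => //.
exists (fun k => if k == ord0 then x 0 ord0 / cN else x 0 k + x 0 ord0 * sN / cN).
split; [|split] => //.
- move=> k; case: ifP => hk.
    by rewrite divr_ge0 //; lra.
  have hq := @sq_le_dotp _ _ x k (negbT hk); rewrite xu in hq.
  have e : sN / cN = si / co.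
    have cn0 : co != 0 by rewrite gt_eqF.
    have cNn0 : cN != 0 by rewrite gt_eqF.
    rewrite -[sN](mulfK cn0) hsc mulrAC; congr (_ / _); by rewrite mulrC mulKf.
  rewrite -mulrA e mulrA.
  set z := x 0 ord0 * si / co.
  have hz : 0 <= z by rewrite /z divr_ge0 ?mulr_ge0 //; lra.
  have hz2 : x 0 k ^+ 2 <= z ^+ 2.
    rewrite /z expr_div_n exprMn ler_pdivlMr ?exprn_gt0 //.
    have : co ^+ 2 <= x 0 ord0 ^+ 2 by rewrite ler_sqr // ?nnegrE; lra.
    nra.
  rewrite leNgt; apply/negP => h; have h1 : 0 < z - x 0 k by lra.
  have h2 : 0 < - (x 0 k + z) by lra.
  have := mulr_gt0 h1 h2; nra.
- apply/rowP => j; rewrite summxE.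
  rewrite (bigD1 ord0) //= /cfg eqxx !mxE.
  have hrest : \sum_(i < d.+1 | i != ord0)
      ((if i == ord0 then x 0 ord0 / cN else x 0 i + x 0 ord0 * sN / cN) *:
        (if i == ord0 then sym cN (- sN) else ek i)) 0 j =
      if j == ord0 then 0 else x 0 j + x 0 ord0 * sN / cN.
    case: ifP => hj.
      rewrite big1 // => i /negPf hi; rewrite hi !mxE.
      by rewrite (eqP hj) eq_sym hi mulr0.
    rewrite (bigD1 j) ?hj //= big1; first by rewrite !mxE eqxx mulr1 addr0.
    by move=> i /andP[/negPf hi hij]; rewrite hi !mxE eq_sym (negPf hij) mulr0.
  have cNn0 : cN != 0 by rewrite gt_eqF.
  rewrite hrest; case: ifP => hj.
    by rewrite (eqP hj) addr0 divfK.
  by field.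
Qed.

Lemma cfg_sdist {R : realType} {d : nat} (cN sN : R) (i j : 'I_d.+1) :
  (i < j)%N -> sdist (@cfg R d cN sN i) (cfg cN sN j) =
     if i == ord0 then acos (- sN) else pi / 2.
Proof.
move=> hij.
have hj : j != ord0 by apply/eqP => h; move: hij; rewrite h ltn0.
rewrite /sdist /cfg (negPf hj); case: ifP => hi.
  by rewrite dotp_ek mxE (negPf hj).
rewrite dotp_ekek.
have -> : (j == i) = false by apply/negP => /eqP h; move: hij; rewrite h ltnn.
by rewrite acos0.
Qed.

Lemma cfg_skel {R : realType} {d : nat} (cN sN : R) :
  skel1_length (@cfg R d cN sN) =
  (\sum_(i < d.+1) \sum_(j < d.+1 | (i < j)%N) (1 : R)) * (pi / 2) +
  d%:R * (acos (- sN) - pi / 2).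
Proof.
rewrite /skel1_length.
have -> : \sum_(i < d.+1) \sum_(j < d.+1 | (i < j)%N) sdist (cfg cN sN i) (cfg cN sN j)
  = \sum_(i < d.+1) \sum_(j < d.+1 | (i < j)%N)
      (pi / 2 + (if i == ord0 then acos (- sN) - pi / 2 else 0)).
  apply: eq_bigr => i _; apply: eq_bigr => j hij; rewrite cfg_sdist //.
  by case: ifP => _; [rewrite addrC subrK|rewrite addr0].
rewrite mulr_suml; under eq_bigr do rewrite big_split /=.
rewrite big_split /=; congr (_ + _).
  by apply: eq_bigr => i _; rewrite mulr_suml; apply: eq_bigr => j _; rewrite mul1r.
rewrite (bigD1 ord0) //= [X in _ + X]big1 ?addr0.
  exact: sum_gt0_const.
by move=> i /negPf hi; rewrite big1 // => j _; rewrite hi.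
Qed.

Lemma cap_support {R : realType} {n : nat} (c nv : 'rV[R]_n) (r : R) :
  0 < r < pi / 2 -> on_sphere c ->
  (forall x, sball c r x -> 0 <= dotp nv x) ->
  0 <= dotp nv c /\ sin r ^+ 2 * dotp nv nv <= dotp nv c ^+ 2.
Proof.
move=> /andP[r0 r2] hc H.
have hpi := pi_gt0 R.
have hr : 0 <= r <= pi by apply/andP; split; lra.
have co0 : 0 < cos r by apply: cos_gt0_pihalf; apply/andP; split; lra.
have si0 : 0 < sin r by apply: sin_gt0_pihalf; apply/andP; split; lra.
have hcs : cos r ^+ 2 + sin r ^+ 2 = 1 by rewrite addrC sin2cos2 subrK.
have hcc : sball c r c.
  split => //; rewrite /sdist hc acos1; lra.
have nc0 := H c hcc.
split => //.
set a := dotp nv c.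
set m := nv - a *: c.
have hmc : dotp m c = 0 by rewrite /m dotpBl dotpZl hc mulr1 subrr.
have hmm : dotp m m = dotp nv nv - a ^+ 2.
  rewrite /m !dotpBl !dotpBr !dotpZl !dotpZr hc (dotpC c nv) -/a; rewrite expr2; ring.
have hnm : dotp nv m = dotp m m.
  by rewrite hmm /m dotpBr dotpZr -/a expr2.
have [h0|h0] := eqVneq (dotp m m) 0.
  have : dotp nv nv = a ^+ 2 by lra.
  move=> ->; have : sin r ^+ 2 <= 1 by have := sqr_ge0 (cos r); lra.
  have := sqr_ge0 a; nra.
have mm0 : 0 < dotp m m by rewrite lt_def h0 dotp_ge0.
set mu := Num.sqrt (dotp m m).
have mu0 : 0 < mu by rewrite sqrtr_gt0.
have mun : mu != 0 by rewrite gt_eqF.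
have mu2 : mu ^+ 2 = dotp m m by rewrite sqr_sqrtr // ltW.
set x := cos r *: c - (sin r / mu) *: m.
have xc : dotp c x = cos r.
  by rewrite /x dotpBr !dotpZr hc (dotpC c m) hmc mulr0 subr0 mulr1.
have xx : dotp x x = 1.
  rewrite /x !dotpBl !dotpBr !dotpZl !dotpZr hc (dotpC c m) hmc -mu2.
  by rewrite -[RHS]hcs; field.
have hx : sball c r x.
  by split => //; rewrite /sdist xc acos_cos.
have := H x hx.
rewrite /x dotpBr !dotpZr -/a hnm -mu2.
have -> : sin r / mu * mu ^+ 2 = sin r * mu by rewrite expr2; field.
move=> hh.
have h1 : sin r * mu <= cos r * a by lra.
have h2 : (sin r * mu) ^+ 2 <= (cos r * a) ^+ 2.
  rewrite ler_sqr ?nnegrE //; [exact: mulr_ge0 (ltW si0) (ltW mu0)| nra].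
move: h2; rewrite !exprMn mu2 hmm.
nra.
Qed.

Lemma sum_neq_const {R : realType} {d : nat} (j : 'I_d.+1) (x : R) :
  \sum_(i < d.+1 | i != j) x = d%:R * x.
Proof.
rewrite sumr_const.
have -> : #|[pred i : 'I_d.+1 | i != j]| = d.
  by have := cardC1 j; rewrite card_ord.
by rewrite mulr_natl.
Qed.

Lemma exists_orth {R : realType} {d : nat} (u : 'rV[R]_d.+2) :
  on_sphere u -> exists a : 'rV[R]_d.+2, a != 0 /\ dotp a u = 0.
Proof.
move=> hu; set w := e0 - u.
exists (refl w (ek (lift ord0 ord0))); split.
  apply/eqP => h.
  have := refl_dot w (ek (lift ord0 ord0)) (ek (lift ord0 ord0)).
  by rewrite h dotp0l dotp_ekek eqxx => /esym/eqP; rewrite oner_eq0.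
rewrite -(@refl_e0 _ _ u hu) refl_dot dotpC.
by rewrite /e0 dotp_ek mxE.
Qed.

Lemma dotp_suml {R : realType} {n m : nat} (w : 'rV[R]_n) (f : 'I_m -> 'rV[R]_n) :
  dotp (\sum_(k < m) f k) w = \sum_(k < m) dotp (f k) w.
Proof. by rewrite dotpC dotp_sumr; apply: eq_bigr => k _; rewrite dotpC. Qed.

Lemma reg_bound {R : realType} {d : nat} (v : 'I_d.+2 -> 'rV[R]_d.+2)
  (c : 'rV[R]_d.+2) (r : R) :
  0 < r < pi / 2 -> on_sphere c -> regular_simplex v -> sball c r `<=` shull v ->
  exists t : R, -1 <= t /\
    skel1_length v = (\sum_(i < d.+2) \sum_(j < d.+2 | (i < j)%N) (1 : R)) * acos t /\
    0 < 1 + (d.+1)%:R * t /\ t < 1 /\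
    ((d.+1)%:R + 1) * sin r ^+ 2 * (1 + d%:R * t) <= 1 - t.
Proof.
move=> hr hc [[vu [[h [hu hh]] vg]] [l hl]] Bin.
set D : R := (d.+1)%:R.
have hD : D = d%:R + 1 by rewrite /D -natr1.
have D0 : 0 <= d%:R :> R by exact: ler0n.
set t := cos l.
have G : forall i j, i != j -> dotp (v i) (v j) = t.
  move=> i j hij; have := hl i j hij; rewrite /sdist => e.
  rewrite /t -e acosK // in_itv /=; apply: dotp_unit_bnd; exact: vu.
have i01 : (ord0 : 'I_d.+2) != ord_max by [].
have hlt : l = acos t.
  by rewrite -(hl _ _ i01) /sdist G.
have tb : -1 <= t <= 1 by rewrite -(G _ _ i01); apply: dotp_unit_bnd; exact: vu.
exists t; split; first by case/andP: tb.
split.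
  rewrite /skel1_length mulr_suml; apply: eq_bigr => i _.
  rewrite mulr_suml; apply: eq_bigr => j hij; rewrite hl ?hlt ?mul1r //.
  by apply/eqP => e; move: hij; rewrite e ltnn.
set V := \sum_(i < d.+2) v i.
have hvV : forall j, dotp (v j) V = 1 + D * t.
  move=> j; rewrite dotp_sumr (bigD1 j) //= vu.
  rewrite (eq_bigr (fun _ => t)); first by rewrite sum_neq_const.
  by move=> i hi; rewrite G // eq_sym.
have hVV : dotp V V = (D + 1) * (1 + D * t).
  rewrite {1}/V dotp_suml (eq_bigr (fun _ => 1 + D * t)); last by move=> j _; exact: hvV.
  by rewrite sumr_const card_ord -mulr_natl -natr1.
have h1 : 0 < 1 + D * t.
  have hV : 0 < dotp h V.
    rewrite dotp_sumr (bigD1 ord0) //=; apply: ltr_pwDl; first exact: hh.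
    by apply: sumr_ge0 => i _; exact: ltW.
  have := @dotp_CS1 _ _ V h hu; rewrite dotpC hVV => hcs.
  have : 0 < (D + 1) * (1 + D * t).
    by apply: (lt_le_trans _ hcs); rewrite exprn_gt0.
  have : 0 < D + 1 by rewrite hD; lra.
  nra.
have h2 : t < 1.
  rewrite lt_def; case/andP: tb => _ ->; rewrite andbT.
  apply/eqP => t1.
  have hall : forall i, v i = v ord0.
    move=> i; have [->//|hi] := eqVneq i ord0.
    apply/eqP; rewrite -subr_eq0; apply/eqP; apply: dotp_eq0.
    rewrite !dotpBl !dotpBr vu (vu ord0) G // (dotpC (v ord0)) G // t1; lra.
  have [a [a0 ha]] := @exists_orth _ _ (v ord0) (vu ord0).
  by apply: vg; exists a; split => // i; rewrite hall.
split => //; split => //.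
set N := fun j => (1 + D * t) *: v j - t *: V.
have hNv : forall j i, dotp (N j) (v i) = if i == j then (1 + D * t) * (1 - t) else 0.
  move=> j i; rewrite /N dotpBl !dotpZl (dotpC V) hvV.
  case: eqP => [->|/eqP hij]; first by rewrite vu; ring.
  by rewrite G 1?eq_sym //; ring.
have hNx : forall j x, sball c r x -> 0 <= dotp (N j) x.
  move=> j x /Bin [_ [lam [l0 [_ ->]]]].
  rewrite dotp_sumr (bigD1 j) //= big1 ?addr0.
    by rewrite dotpZr hNv eqxx; apply: mulr_ge0 => //; apply: mulr_ge0; lra.
  by move=> i hi; rewrite dotpZr hNv (negPf hi) mulr0.
have hNN : forall j, dotp (N j) (N j) = (1 + D * t) * (1 - t) * (1 + d%:R * t).
  move=> j; rewrite /N !dotpBl !dotpBr !dotpZl !dotpZr vu hvV (dotpC V) hvV hVV hD.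
  ring.
have hsum : \sum_(j < d.+2) dotp (N j) c = (1 - t) * dotp V c.
  rewrite /N (eq_bigr (fun j => (1 + D * t) * dotp (v j) c - t * dotp V c)); last first.
    by move=> j _; rewrite dotpBl !dotpZl.
  rewrite sumrB -mulr_sumr -dotp_suml sumr_const card_ord -/V -mulr_natl -natr1 -/D.
  ring.
set Q := (1 + D * t) * (1 - t) * (1 + d%:R * t).
have hQ : 0 <= Q by rewrite /Q -(hNN ord0); exact: dotp_ge0.
set b := Num.sqrt (sin r ^+ 2 * Q).
have b0 : 0 <= b by exact: sqrtr_ge0.
have b2 : b ^+ 2 = sin r ^+ 2 * Q by rewrite sqr_sqrtr // mulr_ge0 // sqr_ge0.
have ha : forall j, b <= dotp (N j) c.
  move=> j; have [a0 aQ] := @cap_support _ _ c (N j) r hr hc (hNx j).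
  rewrite hNN -/Q in aQ.
  by rewrite -ler_sqr ?nnegrE // b2.
have hS : (D + 1) * b <= (1 - t) * dotp V c.
  rewrite -hsum (le_trans _ (ler_sum _ (fun j _ => ha j))) //.
  by rewrite sumr_const card_ord -mulr_natl -natr1.
have hVc := @dotp_CS1 _ _ V c hc.
rewrite hVV in hVc.
have hS2 : ((D + 1) * b) ^+ 2 <= ((1 - t) * dotp V c) ^+ 2.
  by rewrite ler_sqr ?nnegrE //; [apply: mulr_ge0 => //; lra | apply: le_trans hS; apply: mulr_ge0 => //; lra].
move: hS2; rewrite !exprMn b2 /Q => hS2.
have hD1 : 0 < D + 1 by rewrite hD; lra.
have ht1 : 0 < 1 - t by lra.
have key : (D + 1) * ((1 + D * t) * (1 - t)) * ((D + 1) * sin r ^+ 2 * (1 + d%:R * t))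
    <= (D + 1) * ((1 + D * t) * (1 - t)) * (1 - t).
  have e1 : (D + 1) * ((1 + D * t) * (1 - t)) * ((D + 1) * sin r ^+ 2 * (1 + d%:R * t))
     = (D + 1) ^+ 2 * (sin r ^+ 2 * ((1 + D * t) * (1 - t) * (1 + d%:R * t))) by ring.
  have e2 : (D + 1) * ((1 + D * t) * (1 - t)) * (1 - t)
     = (1 - t) ^+ 2 * ((D + 1) * (1 + D * t)) by ring.
  rewrite e1 e2; apply: (le_trans hS2); apply: ler_wpM2l => //.
  exact: sqr_ge0.
rewrite ler_pM2l in key; first by rewrite -/D.
by apply: mulr_gt0 => //; apply: mulr_gt0.
Qed.

Lemma main_core {R : realType} {d : nat} (r K : R) (c : 'rV[R]_d.+2)
  (Sreg : 'I_d.+2 -> 'rV[R]_d.+2) :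
  (0 < d)%N -> 0 < r < pi / 2 -> on_sphere c -> regular_simplex Sreg ->
  sball c r `<=` shull Sreg ->
  0 <= K <= pi / 2 ->
  sin r / Num.sqrt (cos r ^+ 2 + (d.+1)%:R * sin r ^+ 2) <= sin K ->
  2 * K * (1 + ((d.+1)%:R ^+ 2 - 1) * sin r ^+ 2) <
     ((d.+1)%:R + 1) * (((d.+1)%:R + 1) * sin r ^+ 2 - 1) ->
  exists S : 'I_d.+2 -> 'rV[R]_d.+2,
    spherical_simplex S /\ sball c r `<=` shull S /\
    skel1_length S < skel1_length Sreg.
Proof.
move=> d0 hr hc hreg Bin hK hsK hnum.
have [t [t1 [hskel [h1 [h2 hineq]]]]] := @reg_bound _ _ Sreg c r hr hc hreg Bin.
case/andP: hr => r0 r2.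
have hpi := pi_gt0 R.
have co0 : 0 < cos r by apply: cos_gt0_pihalf; apply/andP; split; lra.
have si0 : 0 < sin r by apply: sin_gt0_pihalf; apply/andP; split; lra.
have hcs : cos r ^+ 2 + sin r ^+ 2 = 1 by rewrite addrC sin2cos2 subrK.
set D : R := (d.+1)%:R.
have hD : D = d%:R + 1 by rewrite /D -natr1.
have dge1 : 1 <= d%:R :> R by rewrite ler1n.
set co := cos r; set si := sin r.
set M := co ^+ 2 + D * si ^+ 2.
have M0 : 0 < M by rewrite /M; apply: ltr_pwDl; [exact: exprn_gt0|]; apply: mulr_ge0; [lra|exact: sqr_ge0].
set Nn := Num.sqrt M.
have N0 : 0 < Nn by rewrite sqrtr_gt0.
have N2 : Nn ^+ 2 = M by rewrite sqr_sqrtr // ltW.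
have Nn0 : Nn != 0 by rewrite gt_eqF.
set cN := co / Nn; set sN := si / Nn.
have cN0 : 0 < cN by rewrite divr_gt0.
have sN0 : 0 < sN by rewrite divr_gt0.
have hcsN : cN ^+ 2 + D * sN ^+ 2 = 1.
  by rewrite /cN /sN !expr_div_n N2 mulrA -mulrDl divff // gt_eqF.
have hsc : sN * co = cN * si by rewrite /sN /cN; field.
have hsim : spherical_simplex (@cfg R d.+1 cN sN).
  by apply: cfg_simplex.
have hcont : sball e0 r `<=` shull (@cfg R d.+1 cN sN).
  apply: (@cfg_contain _ _ cN sN co si r) => //; first exact: ltW.
  by apply/andP; split; lra.
have [S [Ss [Sc Sl]]] := @transport _ _ _ c r hc hsim hcont.
exists S; split => //; split => //.
rewrite Sl cfg_skel hskel.
set P := \sum_(i < d.+2) \sum_(j < d.+2 | (i < j)%N) (1 : R).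
have hP : 2 * P = (d.+2)%:R * ((d.+2)%:R - 1) by rewrite /P P_val.
have hP' : 2 * P = (D + 1) * D by rewrite hP -/D -natr1; ring.
have ht : t * (1 + (D ^+ 2 - 1) * si ^+ 2) <= 1 - (D + 1) * si ^+ 2.
  have -> : D ^+ 2 - 1 = (D + 1) * d%:R by rewrite hD; ring.
  move: hineq; rewrite -/D -/si; nra.
have hQ : 0 < 1 + (D ^+ 2 - 1) * si ^+ 2.
  have : 1 <= D ^+ 2 - 1 by rewrite hD; nra.
  have := sqr_ge0 si; nra.
have hKt : 2 * K < (D + 1) * (- t).
  have := hnum; rewrite -/D -/si => hn.
  have e : (D + 1) * (- t) * (1 + (D ^+ 2 - 1) * si ^+ 2) >=
           (D + 1) * ((D + 1) * si ^+ 2 - 1).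
    have : 0 < D + 1 by lra.
    nra.
  nra.
have hK0 : 0 <= K by case/andP: hK.
have tle0 : t <= 0 by nra.
have hacos : pi / 2 - t <= acos t by apply: acos_lb; apply/andP; split.
have hsN1 : sN <= 1.
  rewrite /sN ler_pdivrMr // mul1r -ler_sqr ?nnegrE ?(ltW si0) ?(ltW N0) // N2 /M.
  have : 1 <= D by rewrite hD; lra.
  have := sqr_ge0 co; have := sqr_ge0 si.
  nra.
have hac : acos (- sN) <= pi / 2 + K.
  apply: acos_ub => //; first by apply/andP; split => //; exact: ltW.
have P0 : 0 <= P by nra.
have : P * (pi / 2) + D * (acos (- sN) - pi / 2) <= P * (pi / 2) + D * K.
  rewrite lerD2l; apply: ler_wpM2l; [lra|lra].
move=> hle; apply: (le_lt_trans hle).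
apply: (lt_le_trans _ (ler_wpM2l P0 hacos)).
have : D * K < P * (- t).
  have D0 : 0 < D by lra.
  nra.
lra.
Qed.

Lemma y_le {R : realType} (D co si L : R) :
  1 <= D -> co ^+ 2 + si ^+ 2 = 1 -> 0 < si -> 0 <= L -> 1 / D <= L ^+ 2 ->
  si / Num.sqrt (co ^+ 2 + D * si ^+ 2) <= L.
Proof.
move=> D1 hcs si0 L0 hL.
set M := co ^+ 2 + D * si ^+ 2.
have M0 : 0 < M.
  rewrite /M; have := sqr_ge0 co; have : 0 < si ^+ 2 by exact: exprn_gt0.
  nra.
have N0 : 0 < Num.sqrt M by rewrite sqrtr_gt0.
have N2 : Num.sqrt M ^+ 2 = M by rewrite sqr_sqrtr // ltW.
rewrite -ler_sqr ?nnegrE //; last by rewrite divr_ge0 // ltW.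
rewrite expr_div_n N2; apply: le_trans hL.
rewrite ler_pdivrMr // mulrC mulrA.
rewrite mulr1 ler_pdivlMr; last lra.
rewrite /M; have := sqr_ge0 co; lra.
Qed.

Lemma num_i_N3 {R : realType} (D u : R) :
  3 <= D -> 999 / 1000 <= u -> u <= 1 ->
  2 * (1 / 2 + 12 / 25 * (1 / D)) * (1 + (D ^+ 2 - 1) * u) <
    (D + 1) * ((D + 1) * u - 1).
Proof.
move=> D3 u1 u2.
rewrite -subr_gt0.
have -> : (D + 1) * ((D + 1) * u - 1) -
   2 * (1 / 2 + 12 / 25 * (1 / D)) * (1 + (D ^+ 2 - 1) * u) =
   (u * (26 * D ^+ 2 + 50 * D + 24) - (25 * D ^+ 2 + 50 * D + 24)) / (25 * D).
  by field; lra.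
apply: divr_gt0; last lra.
have h : 999 / 1000 * (26 * D ^+ 2 + 50 * D + 24) <= u * (26 * D ^+ 2 + 50 * D + 24).
  by apply: ler_wpM2r => //; nra.
have : 0 < 999 / 1000 * (26 * D ^+ 2 + 50 * D + 24) - (25 * D ^+ 2 + 50 * D + 24).
  nra.
lra.
Qed.

Lemma num_i_N2 {R : realType} (D : R) :
  3 <= D -> 1 / D <= (1 / 2 + 12 / 25 * (1 / D) - 1 / 20) ^+ 2.
Proof.
move=> D3.
set z := 1 / D.
have z0 : 0 < z by rewrite /z divr_gt0 //; lra.
have z3 : z <= 1 / 3 by rewrite /z ler_pdivrMr; lra.
nra.
Qed.

Lemma num_K_i {R : realType} (D : R) :
  3 <= D -> 0 < 1 / 2 + 12 / 25 * (1 / D) <= 2 / 3.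
Proof.
move=> D3.
have z0 : 0 < 1 / D by rewrite divr_gt0 //; lra.
have z3 : 1 / D <= 1 / 3 by rewrite ler_pdivrMr; lra.
apply/andP; split; lra.
Qed.

Lemma sinK_lb {R : realType} (K : R) : 0 < K <= 2 / 3 -> K - 1 / 20 <= sin K.
Proof.
move=> /andP[K0 K1].
have := @sin_gt_cubic R K; rewrite K0 /= => /(_ ltac:(lra)) h.
have : K ^+ 3 <= (2 / 3) ^+ 3.
  by rewrite ler_pXn2r // ?nnegrE; lra.
move=> h3; apply: ltW; apply: le_lt_trans h.
have : (2 / 3 : R) ^+ 3 = 8 / 27 by rewrite !exprS expr0; field.
lra.
Qed.

Lemma num_ii_N3 {R : realType} (D u : R) :
  30 <= D -> 0 < u -> u <= 1 -> 3 <= D * u ->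
  2 * (1 / 5) * (1 + (D ^+ 2 - 1) * u) < (D + 1) * ((D + 1) * u - 1).
Proof.
move=> D30 u0 u1 Du.
have : 3 * D <= D * (D * u) by rewrite mulrC; apply: ler_wpM2l; lra.
nra.
Qed.

Lemma num_ii_N2 {R : realType} (D : R) :
  30 <= D -> 1 / D <= (1 / 5 - 1 / 750) ^+ 2.
Proof.
move=> D30.
have : 1 / D <= 1 / 30 by rewrite ler_pdivrMr; lra.
lra.
Qed.

Lemma sin15 {R : realType} : 1 / 5 - 1 / 750 <= sin (1 / 5 : R).
Proof.
have := @sin_gt_cubic R (1 / 5); rewrite (_ : 0 < 1 / 5 < 2 = true); last first.
  by apply/andP; split; lra.
move=> /(_ isT) h; apply: ltW; apply: le_lt_trans h.
rewrite !exprS expr0; lra.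
Qed.

Lemma part_i_eps {R : realType} : 0 < pi / 2 - asin (9995 / 10000 : R).
Proof.
have := @asin_ltpi2 R (9995 / 10000) ltac:(apply/andP; split; lra); lra.
Qed.

Lemma part_i_r {R : realType} (s0 r : R) : 0 < s0 < 1 ->
  pi / 2 - (pi / 2 - asin s0) < r -> r < pi / 2 ->
  0 < r /\ s0 < sin r.
Proof.
move=> /andP[s00 s01] hr1 hr2.
have hs0 : -1 <= s0 <= 1 by apply/andP; split; lra.
have as1 := asin_geNpi2 hs0.
have hra : asin s0 < r by lra.
have hsin : s0 < sin r.
  have e := asinK (x:=s0); rewrite in_itv /= hs0 in e.
  rewrite -[X in X < _](e isT) ltr_sin // in_itv /=; apply/andP; split; lra.
split => //.
rewrite ltNge; apply/negP => hr.
have : 0 <= sin (- r) by apply: sin_ge0_pi; apply/andP; split; have := pi_gt0 R; lra.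
rewrite sinN; lra.
Qed.

Lemma part_i_u {R : realType} (r : R) :
  9995 / 10000 < sin r -> 999 / 1000 <= sin r ^+ 2 /\ sin r ^+ 2 <= 1.
Proof.
move=> h; have := sin_le1 r; nra.
Qed.

Lemma part_i_K {R : realType} (D : R) : 3 <= D -> 0 <= 1 / 2 + 12 / 25 * (1 / D) - 1 / 20.
Proof.
move=> D3; have : 0 < 1 / D by rewrite divr_gt0 //; lra.
set z := 1 / D; lra.
Qed.

Lemma part_K_le {R : realType} (K : R) : 0 < K <= 2 / 3 -> 0 <= K <= pi / 2.
Proof.
move=> /andP[h1 h2]; have := pihalf_ge1 R; move=> h; apply/andP; split; lra.
Qed.

Lemma part_ii_u {R : realType} (r : R) : 0 < r -> r < pi / 2 ->
  0 < sin r /\ 0 < sin r ^+ 2 /\ sin r ^+ 2 <= 1.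
Proof.
move=> r0 r2.
have si0 : 0 < sin r by apply: sin_gt0_pihalf; apply/andP; split.
split => //; split; first exact: exprn_gt0.
have := sin_le1 r; nra.
Qed.

Lemma part_ii_D {R : realType} (u D : R) (n : nat) :
  0 < u -> 3 / u < n%:R -> n%:R <= D -> 3 <= D * u.
Proof.
move=> u0 h1 h2; have : 3 / u < D by lra.
by rewrite ltr_pdivrMr // => ?; lra.
Qed.

Theorem mainTheorem11 (R : realType) :
  (* (i) *)
  (forall d : nat, (3 <= d)%N ->
    exists eps : R, 0 < eps /\
    forall r : R, pi / 2 - eps < r -> r < pi / 2 ->
    forall (c : 'rV[R]_d.+1), on_sphere c ->
    forall Sreg : 'I_d.+1 -> 'rV[R]_d.+1,
      regular_simplex Sreg -> circumscribed Sreg (sball c r) ->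
    exists S : 'I_d.+1 -> 'rV[R]_d.+1,
      spherical_simplex S /\ sball c r `<=` shull S /\
      skel1_length S < skel1_length Sreg)
  /\
  (* (ii) *)
  (forall r : R, 0 < r -> r < pi / 2 ->
    exists d0 : nat, forall d : nat, (2 <= d)%N -> (d0 <= d)%N ->
    forall (c : 'rV[R]_d.+1), on_sphere c ->
    forall Sreg : 'I_d.+1 -> 'rV[R]_d.+1,
      regular_simplex Sreg -> circumscribed Sreg (sball c r) ->
    exists S : 'I_d.+1 -> 'rV[R]_d.+1,
      spherical_simplex S /\ sball c r `<=` shull S /\
      skel1_length S < skel1_length Sreg).
Proof.
split.
- move=> [|d] hd; first by [].
  exists (pi / 2 - asin (9995 / 10000)); split; first exact: part_i_eps.
  move=> r hr1 hr2 c hc Sreg hreg [Bin _].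
  have [r0 hsin] := @part_i_r R (9995 / 10000) r ltac:(apply/andP; split; lra) hr1 hr2.
  have [u1 u2] := @part_i_u R r hsin.
  have si0 : 0 < sin r by move: hsin; lra.
  set D : R := (d.+1)%:R.
  have D3 : 3 <= D by rewrite /D (ler_nat R 3 d.+1).
  have hK := @num_K_i R D D3.
  apply: (@main_core R d r (1 / 2 + 12 / 25 * (1 / D)) c Sreg _ _ hc hreg Bin).
  + by case: d hd {hreg Bin hc Sreg c D D3 hK}.
  + by apply/andP; split.
  + exact: part_K_le.
  + apply: (@le_trans _ _ (1 / 2 + 12 / 25 * (1 / D) - 1 / 20)); last exact: sinK_lb.
    apply: y_le.
    * by apply: le_trans D3; rewrite ler1n.
    * by rewrite addrC sin2cos2 subrK.
    * exact: si0.
    * exact: part_i_K.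
    * exact: num_i_N2.
  + exact: num_i_N3.
- move=> r r0 r2.
  have [si0 [u0 u1]] := @part_ii_u R r r0 r2.
  exists (maxn 30 (Num.Def.archi_bound (3 / sin r ^+ 2))).
  move=> [|d] hd hd0 c hc Sreg hreg [Bin _]; first by [].
  set D : R := (d.+1)%:R.
  have D30 : 30 <= D.
    rewrite /D (ler_nat R 30 d.+1); apply: leq_trans hd0; exact: leq_maxl.
  have Du : 3 <= D * sin r ^+ 2.
    apply: (@part_ii_D R _ _ (Num.Def.archi_bound (3 / sin r ^+ 2))).
    * exact: u0.
    * by apply: archi_boundP; apply: divr_ge0; [lra | exact: ltW].
    * by rewrite /D ler_nat; apply: leq_trans hd0; exact: leq_maxr.
  apply: (@main_core R d r (1 / 5) c Sreg _ _ hc hreg Bin).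
  + by case: d hd {hreg Bin hc Sreg c D D30 Du hd0}.
  + by apply/andP; split.
  + by apply: part_K_le; apply/andP; split; lra.
  + apply: (@le_trans _ _ (1 / 5 - 1 / 750)); last exact: sin15.
    apply: y_le.
    * by apply: le_trans D30; rewrite ler1n.
    * by rewrite addrC sin2cos2 subrK.
    * exact: si0.
    * lra.
    * exact: num_ii_N2.
  + exact: num_ii_N3.
Qed.
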